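(* Let $(q_l)_{l\ge1}$ be positive numbers with $q_1=1$ and $0<R:=\lim_{l\to\infty}q_l/q_{l+1}<\infty$, and assume (EQ): $\tilde f(1)>1$, or $\tilde f(1)=1$ and $\tilde g(1)<\infty$. Let $\rho^*>0$, let $\mu^*\in(0,1]$ be the unique solution of $\tilde f(\mu^* )=1$, and let $z^*_l=N^*\tilde q_l(\mu^* )^l$ with $N^*=\rho^*/\tilde g(\mu^* )$. Then every $z\in X_{0+}$ with $\rho(z)=\rho^*$ satisfies $$\tilde A(z)\ \ge\ \rho^*\ln\mu^*=\tilde A(z^* ).$$
   Context: $X=\{z=(z_l)_{l\ge1}:\sum_l l|z_l|<\infty\}$, $X_{0+}$ its nonnegative elements, $\rho(z)=\sum_l lz_l$, $N(z)=\sum_l z_l$. $\tilde q_l=q_lR^l$, $\tilde f(\mu)=\sum_{l\ge1}\tilde q_l\mu^l$, $\tilde g(\mu)=\sum_{l\ge1}l\tilde q_l\mu^l$, $\tilde f(1)=\sum_l\tilde q_l\in(0,\infty]$, $\tilde g(1)=\sum_l l\tilde q_l\in(0,\infty]$. For $z\in X_{0+}\setminus\{0\}$, $\tilde A(z)=\sum_l z_l\ln\big(z_l/(\tilde q_lN(z))\big)$ with $0\ln0=0$, and $\tilde A(0)=0$. *)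

(* Defs.v *)
From Stdlib Require Import Reals.
From Coquelicot Require Import Coquelicot.
Open Scope R_scope.

(* Sequences are functions nat -> R; only indices l >= 1 are meaningful,
   index 0 is ignored everywhere. *)

(* Extended-real value of sum_{l>=1} a_l, as the limit of partial sums
   (for nonnegative terms this is the sum in [0, +oo]). *)
Definition sum1 (a : nat -> R) : Rbar :=
  Lim_seq (fun n => sum_n (fun k => a (S k)) n).

Definition qt (q : nat -> R) (Rr : R) (l : nat) : R := q l * Rr ^ l.

Definition ft (q : nat -> R) (Rr mu : R) : Rbar :=
  sum1 (fun l => qt q Rr l * mu ^ l).
Definition gt (q : nat -> R) (Rr mu : R) : Rbar :=
  sum1 (fun l => INR l * qt q Rr l * mu ^ l).

Definition inX0 (z : nat -> R) : Prop :=
  (forall l : nat, (1 <= l)%nat -> 0 <= z l) /\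
  ex_series (fun k => INR (S k) * Rabs (z (S k))).

Definition rho (z : nat -> R) : R := Series (fun k => INR (S k) * z (S k)).
Definition Nz (z : nat -> R) : R := Series (fun k => z (S k)).

(* A~(z) = sum_l z_l ln(z_l / (q~_l N(z))), with 0 ln 0 = 0.
   Terms with z_l = 0 are 0 * (...) = 0 automatically, and for z = 0 every
   term vanishes, so A~(0) = 0 as required. *)
Definition Atilde (q : nat -> R) (Rr : R) (z : nat -> R) : Rbar :=
  sum1 (fun l => z l * ln (z l / (qt q Rr l * Nz z))).

(* Main.v *)
Require Import Defs.
From Stdlib Require Import Reals Lra Lia Classical.
From Coquelicot Require Import Coquelicot.
Open Scope R_scope.

Lemma psum_nonneg (a : nat -> R) : (forall k, 0 <= a k) -> forall n, 0 <= sum_n a n.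
Proof. intros H n; induction n. rewrite sum_O; auto.
rewrite sum_Sn; change (plus (sum_n a n) (a (S n))) with (sum_n a n + a (S n)); generalize (H (S n)); lra. Qed.

Lemma psum_incr (a : nat -> R) : (forall k, 0 <= a k) -> forall n, sum_n a n <= sum_n a (S n).
Proof. intros H n. rewrite sum_Sn; change (plus (sum_n a n) (a (S n))) with (sum_n a n + a (S n)); generalize (H (S n)); lra. Qed.

Lemma term_le_psum (a : nat -> R) : (forall k, 0 <= a k) -> forall n, a n <= sum_n a n.
Proof. intros H n; destruct n. rewrite sum_O; lra.
rewrite sum_Sn; change (plus (sum_n a n) (a (S n))) with (sum_n a n + a (S n)); generalize (psum_nonneg a H n); lra. Qed.

Lemma fin_series (a : nat -> R) (L : R) : (forall k, 0 <= a k) ->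
  Lim_seq (fun n => sum_n a n) = Finite L -> is_series a L.
Proof. intros H HL. assert (E := ex_lim_seq_incr _ (psum_incr a H)).
apply Lim_seq_correct in E. assert (HL2 : Lim_seq (sum_n a) = Finite L) by exact HL. rewrite HL2 in E. exact E. Qed.

Lemma series_lim (a : nat -> R) (L : R) : is_series a L -> Lim_seq (fun n => sum_n a n) = Finite L.
Proof. intros H; apply is_lim_seq_unique; exact H. Qed.

Lemma ln_le_m1 (x : R) : 0 < x -> ln x <= x - 1.
Proof. intros Hx. rewrite <- (ln_exp (x - 1)). apply ln_le; auto.
generalize (exp_ineq1_le (x - 1)); lra. Qed.

Lemma qt_pos q Rr l : (forall l : nat, (1 <= l)%nat -> 0 < q l) -> 0 < Rr -> (1 <= l)%nat -> 0 < qt q Rr l.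
Proof. intros Hq HR Hl; unfold qt; apply Rmult_lt_0_compat; auto; apply pow_lt; auto. Qed.

Lemma g_ex (q : nat -> R) (Rr mus : R)
  (hqpos : forall l : nat, (1 <= l)%nat -> 0 < q l)
  (hR : is_lim_seq (fun l => q l / q (S l)) (Finite Rr))
  (hRpos : 0 < Rr) (hmu : 0 < mus < 1) :
  ex_series (fun k => INR (S k) * qt q Rr (S k) * mus ^ (S k)).
Proof.
  set (a := fun k => INR (S k) * qt q Rr (S k) * mus ^ (S k)).
  assert (Hapos : forall k, 0 < a k).
  { intro k; unfold a. apply Rmult_lt_0_compat. apply Rmult_lt_0_compat.
    apply lt_0_INR; lia. apply qt_pos; auto; lia. apply pow_lt; lra. }
  apply ex_series_ext with (fun n => Rabs (a n)).
  { intro n; apply Rabs_right; generalize (Hapos n); lra. }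
  apply ex_series_DAlembert with mus. lra.
  { intro n; generalize (Hapos n); lra. }
  assert (H1 : is_lim_seq (fun n => q (S n) / q (S (S n))) Rr).
  { apply (is_lim_seq_incr_1 (fun l => q l / q (S l))). exact hR. }
  assert (H2 := is_lim_seq_inv _ _ H1).
  assert (H2' : is_lim_seq (fun n => / (q (S n) / q (S (S n)))) (/ Rr)).
  { apply H2. intro E; injection E; lra. }
  assert (H3 : is_lim_seq (fun n => / INR (S n)) 0).
  { assert (E := is_lim_seq_inv _ _ (proj1 (is_lim_seq_incr_1 INR p_infty) is_lim_seq_INR)).
    apply E. discriminate. }
  assert (H4 := is_lim_seq_plus' _ _ _ _ (is_lim_seq_const 1) H3).
  assert (H5 := is_lim_seq_mult' _ _ _ _ H4 H2').
  assert (H6 := is_lim_seq_mult' _ _ _ _ H5 (is_lim_seq_const (Rr * mus))).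
  replace mus with ((1 + 0) * / Rr * (Rr * mus)) by (field; lra).
  eapply is_lim_seq_ext; [| exact H6].
  intro n. simpl.
  assert (Hq1 : 0 < q (S n)) by (apply hqpos; lia).
  assert (Hq2 : 0 < q (S (S n))) by (apply hqpos; lia).
  assert (Hn : 0 < INR (S n)) by (apply lt_0_INR; lia).
  rewrite Rabs_right.
  2: { apply Rle_ge, Rlt_le, Rdiv_lt_0_compat; apply Hapos. }
  unfold a, qt. rewrite S_INR. rewrite S_INR in Hn. simpl. field.
  repeat split; try lra; try (apply pow_nonzero; lra). destruct n; simpl in *; lra.
Qed.

Theorem corollary11 (q : nat -> R) (Rr rhos mus : R)
  (hqpos : forall l : nat, (1 <= l)%nat -> 0 < q l)
  (hq1 : q 1%nat = 1)
  (hR : is_lim_seq (fun l => q l / q (S l)) (Finite Rr))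
  (hRpos : 0 < Rr)
  (hEQ : Rbar_lt (Finite 1) (ft q Rr 1)
         \/ (ft q Rr 1 = Finite 1 /\ is_finite (gt q Rr 1)))
  (hrho : 0 < rhos)
  (hmu : 0 < mus <= 1)
  (hfmu : ft q Rr mus = Finite 1) :
  let Ns := rhos / real (gt q Rr mus) in
  let zs := fun l : nat => Ns * qt q Rr l * mus ^ l in
  (forall z : nat -> R, inX0 z -> rho z = rhos ->
     Rbar_le (Finite (rhos * ln mus)) (Atilde q Rr z))
  /\ Atilde q Rr zs = Finite (rhos * ln mus).
Proof.
  intros Ns zs.
  set (w := fun k => qt q Rr (S k) * mus ^ (S k)).
  assert (Hwpos : forall k, 0 < w k).
  { intro k; unfold w; apply Rmult_lt_0_compat. apply qt_pos; auto; lia. apply pow_lt; lra. }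
  assert (Hw : is_series w 1).
  { apply fin_series. intro k; generalize (Hwpos k); lra. exact hfmu. }
  split.
  - intros z [hz0 hzs] hrz.
    assert (Hzs : forall k, 0 <= z (S k)) by (intro k; apply hz0; lia).
    assert (Hrho : is_series (fun k => INR (S k) * z (S k)) rhos).
    { rewrite <- hrz. unfold rho. apply Series_correct.
      eapply ex_series_ext; [| exact hzs]. intro n; simpl.
      rewrite Rabs_right; auto. apply Rle_ge, Hzs. }
    assert (Hex : ex_series (fun k => z (S k))).
    { eapply (@ex_series_le R_AbsRing R_CompleteNormedModule); [| exact hzs]. intro n. change (norm (z (S n))) with (Rabs (z (S n))).
      rewrite Rabs_right by (apply Rle_ge, Hzs).
      rewrite Rabs_right by (apply Rle_ge, Hzs).
      rewrite S_INR. generalize (pos_INR n) (Hzs n); nra. }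
    set (N := Nz z).
    assert (HN : is_series (fun k => z (S k)) N) by (apply Series_correct; exact Hex).
    assert (HNpos : 0 < N).
    { destruct (Rlt_or_le 0 N) as [h|h]; auto. exfalso.
      assert (Hz0 : forall k, z (S k) = 0).
      { intro k. assert (A := term_le_psum _ Hzs k).
        assert (B := is_lim_seq_incr_compare _ _ HN (psum_incr _ Hzs) k).
        assert (C : z (S k) <= N) by (eapply Rle_trans; [exact A | exact B]). generalize (Hzs k); lra. }
      assert (C := is_series_scal_r 0 _ _ Hrho).
      assert (D : is_series (fun n => INR (S n) * z (S n) * 0) rhos).
      { eapply is_series_ext; [| exact Hrho]. intro n; simpl. rewrite Hz0; ring. }
      assert (E1 := is_series_unique _ _ C). assert (E2 := is_series_unique _ _ D).
      rewrite E1 in E2. lra. }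
    set (e := fun k => z (S k) * ln (z (S k) / (qt q Rr (S k) * N))
                       - INR (S k) * z (S k) * ln mus - z (S k) + N * w k).
    set (h := fun k => INR (S k) * z (S k) * ln mus + z (S k) - N * w k).
    assert (He : forall k, 0 <= e k).
    { intro k. unfold e. assert (Hq := qt_pos q Rr (S k) hqpos hRpos ltac:(lia)).
      assert (Hw' := Hwpos k).
      destruct (Hzs k) as [hp | h0].
      2: { rewrite <- h0. unfold Rdiv. rewrite !Rmult_0_l, Rmult_0_r. nra. }
      unfold w in *. set (y := N * (qt q Rr (S k) * mus ^ S k)).
      assert (Hy : 0 < y) by (unfold y; nra).
      assert (L1 : ln (z (S k) / (qt q Rr (S k) * N)) - INR (S k) * ln mus = ln (z (S k)) - ln y).
      { unfold y. rewrite ln_div by nra. rewrite !ln_mult by (try apply pow_lt; lra).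
        rewrite ln_pow by lra. ring. }
      assert (L2 := ln_le_m1 (y / z (S k)) ltac:(apply Rdiv_lt_0_compat; lra)).
      rewrite ln_div in L2 by lra.
      assert (L3 : z (S k) * (ln y - ln (z (S k))) <= z (S k) * (y / z (S k) - 1)).
      { apply Rmult_le_compat_l; lra. }
      replace (z (S k) * (y / z (S k) - 1)) with (y - z (S k)) in L3 by (field; lra).
      assert (L4 : z (S k) * ln (z (S k) / (qt q Rr (S k) * N)) - INR (S k) * z (S k) * ln mus
                   = z (S k) * (ln (z (S k)) - ln y)) by (rewrite <- L1; ring).
      fold y. lra. }
    assert (Hh : is_series h (rhos * ln mus)).
    { assert (A1 := is_series_scal_r (ln mus) _ _ Hrho).
      assert (A2 := is_series_scal_r N _ _ Hw).
      assert (A3 := is_series_plus _ _ _ _ A1 HN).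
      assert (A4 := is_series_minus _ _ _ _ A3 A2).
      replace (rhos * ln mus) with (plus (plus (rhos * ln mus) N) (opp (1 * N))).
      2: { change (rhos * ln mus + N + - (1 * N) = rhos * ln mus). ring. }
      eapply is_series_ext; [| exact A4]. intro n. unfold h.
      change (INR (S n) * z (S n) * ln mus + z (S n) + - (w n * N) = INR (S n) * z (S n) * ln mus + z (S n) - N * w n).
      ring. }
    assert (Hh' : is_lim_seq (sum_n h) (rhos * ln mus)) by exact Hh.
    unfold Atilde, sum1.
    rewrite (Lim_seq_ext _ (fun n => sum_n e n + sum_n h n)).
    2: { intro n. rewrite <- (sum_n_plus e h). apply sum_n_ext. intro k.
         change (z (S k) * ln (z (S k) / (qt q Rr (S k) * Nz z)) = e k + h k).
         unfold e, h. fold N. ring. }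
    assert (Exe : ex_lim_seq (fun n => sum_n e n)).
    { apply ex_lim_seq_incr. apply psum_incr. exact He. }
    rewrite Lim_seq_plus; auto.
    2: { exists (rhos * ln mus). exact Hh. }
    2: { rewrite (is_lim_seq_unique (sum_n h) _ Hh'). destruct (Lim_seq (sum_n e)); simpl; auto. }
    rewrite (is_lim_seq_unique (sum_n h) _ Hh').
    assert (G : Rbar_le (Finite 0) (Lim_seq (sum_n e))).
    { rewrite <- (Lim_seq_const 0). apply Lim_seq_le_loc. exists 0%nat. intros n _.
      apply psum_nonneg; exact He. }
    destruct (Lim_seq (sum_n e)); simpl in *; lra.
  -
    set (ga := fun k => INR (S k) * qt q Rr (S k) * mus ^ (S k)).
    assert (Hgex : ex_series ga).
    { destruct (Rlt_or_le mus 1) as [hl | hl].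
      - apply g_ex; auto; lra.
      - assert (mus = 1) by lra. subst mus.
        destruct hEQ as [hlt | [_ hfin]].
        + rewrite hfmu in hlt. simpl in hlt. lra.
        + exists (real (gt q Rr 1)). apply fin_series.
          * intro k; unfold ga. apply Rlt_le. apply Rmult_lt_0_compat. apply Rmult_lt_0_compat.
            apply lt_0_INR; lia. apply qt_pos; auto; lia. apply pow_lt; lra.
          * unfold is_finite in hfin. rewrite hfin. reflexivity. }
    set (G := Series ga).
    assert (HG : is_series ga G) by (apply Series_correct; exact Hgex).
    assert (Hgt : gt q Rr mus = Finite G) by (apply (series_lim _ _ HG)).
    assert (HGpos : 0 < G).
    { assert (A := is_lim_seq_incr_compare _ _ HG).
      assert (Hga : forall k, 0 <= ga k).
      { intro k; unfold ga. apply Rlt_le. apply Rmult_lt_0_compat. apply Rmult_lt_0_compat.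
        apply lt_0_INR; lia. apply qt_pos; auto; lia. apply pow_lt; lra. }
      specialize (A (psum_incr _ Hga) 0%nat). rewrite sum_O in A.
      unfold ga, qt in A. rewrite hq1 in A. simpl in A. nra. }
    assert (HNs : Ns = rhos / G) by (unfold Ns; rewrite Hgt; reflexivity).
    assert (HNz : Nz zs = Ns).
    { unfold Nz. apply is_series_unique.
      assert (A := is_series_scal_l Ns _ _ Hw).
      assert (A0 : is_series (fun n => Ns * w n) (Ns * 1)) by exact A. rewrite Rmult_1_r in A0. clear A. rename A0 into A.
      eapply is_series_ext; [| exact A]. intro n. unfold zs, w.
      change (Ns * (qt q Rr (S n) * mus ^ S n) = Ns * qt q Rr (S n) * mus ^ S n). ring. }
    unfold Atilde, sum1. apply series_lim.
    assert (A := is_series_scal_l (Ns * ln mus) _ _ HG).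
    replace (rhos * ln mus) with (scal (Ns * ln mus) G).
    2: { change (Ns * ln mus * G = rhos * ln mus). rewrite HNs. field. lra. }
    eapply is_series_ext; [| exact A]. intro n. rewrite HNz.
    assert (Hq := qt_pos q Rr (S n) hqpos hRpos ltac:(lia)).
    assert (HNsp : 0 < Ns) by (rewrite HNs; apply Rdiv_lt_0_compat; lra).
    unfold zs.
    replace (Ns * qt q Rr (S n) * mus ^ S n / (qt q Rr (S n) * Ns)) with (mus ^ S n) by (field; lra).
    rewrite ln_pow by lra.
    change (Ns * ln mus * ga n = Ns * qt q Rr (S n) * mus ^ S n * (INR (S n) * ln mus)).
    unfold ga. ring.
Qed.
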